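(* For any $\epsilon>0$ there is a $c'>0$ such that for all $n'$ and any $1\le R\le n'$, the probability that a matrix $Z$ chosen uniformly at random from the rank-$R$ matrices in $\mathbb{Z}_D^{n'\times n'}$ has all row and column weights at most $c'n'$ is $O(1)\cdot D^{R^2-2(1-\epsilon)n'R}$.
   Context: $D$ is an odd prime and $\mathbb{Z}_D$ the field with $D$ elements. The weight of a row or column is its number of nonzero entries. *)

(* Defs.v *)
From mathcomp Require Import all_boot all_order all_algebra.
From Stdlib Require Import Reals.
Set Implicit Arguments. Unset Strict Implicit. Unset Printing Implicit Defensive.
Import GRing.Theory.

Definition row_weight (D n : nat) (Z : 'M['F_D]_n) (i : 'I_n) : nat :=
  #|[set j : 'I_n | Z i j != GRing.zero]|.
Definition col_weight (D n : nat) (Z : 'M['F_D]_n) (j : 'I_n) : nat :=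
  #|[set i : 'I_n | Z i j != GRing.zero]|.

Definition Rleb (x y : R) : bool := if Rle_dec x y then true else false.

Definition weights_le (D n : nat) (Z : 'M['F_D]_n) (w : R) : bool :=
  [forall i : 'I_n, Rleb (INR (row_weight Z i)) w] &&
  [forall j : 'I_n, Rleb (INR (col_weight Z j)) w].

Definition prob_low_weight (D n r : nat) (w : R) : R :=
  (INR #|[pred Z : 'M['F_D]_n | (\rank Z == r) && weights_le Z w]|
   / INR #|[pred Z : 'M['F_D]_n | \rank Z == r]|)%R.

(* Main.v *)
Require Import Defs.
From mathcomp Require Import all_boot all_order all_algebra.
From Stdlib Require Import Reals.
From mathcomp Require Import all_fingroup zify.
From Stdlib Require Import Lra.
From Stdlib Require ZArith.
Set Implicit Arguments. Unset Strict Implicit. Unset Printing Implicit Defensive.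
Import GRing.Theory.
Local Notation "m ^ n" := (expn m n) : nat_scope.

Section NatPart.

Section W.
Variables (F : finFieldType) (n : nat).

Definition vwt (v : 'rV[F]_n) : nat := #|[set j : 'I_n | v ord0 j != GRing.zero]|.

Lemma vwt_le (v : 'rV[F]_n) : vwt v <= n.
Proof. by rewrite /vwt -[X in _ <= X]card_ord max_card. Qed.

Lemma zw_eq m (v : 'rV[F]_n) :
  \prod_(j < n) (if v ord0 j == GRing.zero then m else 1) = m ^ (n - vwt v).
Proof.
rewrite -big_mkcond /= prod_nat_const; congr (_ ^ _).
have := cardC [pred j : 'I_n | v ord0 j == GRing.zero]; rewrite card_ord => e.
have e2 : vwt v = #|[predC [pred j : 'I_n | v ord0 j == GRing.zero]]|.
  by rewrite /vwt; apply: eq_card => j; rewrite !inE.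
rewrite e2; apply/eqP; rewrite -(eqn_add2r #|[predC [pred j : 'I_n | v ord0 j == GRing.zero]]|) subnK.
  exact/eqP.
by rewrite -[X in _ <= X]e leq_addl.
Qed.

Lemma sum_all m :
  \sum_(v : 'rV[F]_n) \prod_(j < n) (if v ord0 j == GRing.zero then m else 1) =
  (m + #|F|.-1) ^ n.
Proof.
pose h (f : {ffun 'I_n -> F}) : 'rV[F]_n := @matrix_of_fun F 1 n matrix_key (fun _ j => f j).
have hb : bijective h.
  exists (fun v : 'rV[F]_n => [ffun j => v ord0 j]).
    by move=> f; apply/ffunP => j; rewrite ffunE mxE.
  by move=> v; apply/rowP => j; rewrite mxE ffunE.
rewrite (reindex h) /=; last by apply: onW_bij.
under eq_bigr do under eq_bigr do rewrite mxE.
rewrite -(bigA_distr_bigA (fun (j : 'I_n) (x : F) => if x == GRing.zero then m else 1)) /=.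
rewrite -[X in _ = _ ^ X]card_ord -prod_nat_const; apply: eq_bigr => j _.
rewrite (bigD1 (GRing.zero : F)) //= eqxx; congr (_ + _).
rewrite (eq_bigr (fun _ => 1)); last by move=> x /negPf ->.
by rewrite sum_nat_const muln1 -(cardC1 (GRing.zero : F)); apply: eq_card => x; rewrite !inE.
Qed.

Lemma count_lw m k : 0 < m ->
  #|[set v : 'rV[F]_n | vwt v <= k]| * m ^ n <= m ^ k * (m + #|F|.-1) ^ n.
Proof.
move=> m0.
rewrite -sum_nat_const.
apply: (@leq_trans (\sum_(v in [set v : 'rV[F]_n | vwt v <= k]) m ^ k * m ^ (n - vwt v))).
  apply: leq_sum => v; rewrite inE => hv; rewrite -expnD leq_pexp2l //.
  by have := vwt_le v; lia.
rewrite -big_distrr /= leq_mul2l -sum_all; apply/orP; right.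
rewrite [X in _ <= X](bigID (mem [set v : 'rV[F]_n | vwt v <= k])) /=.
apply: leq_trans (leq_addr _ _); apply: leq_sum => v _; by rewrite zw_eq.
Qed.
End W.


End NatPart.

Section RingPart.
Local Open Scope ring_scope.


Lemma recon (F : fieldType) n r (Z : 'M[F]_n) (f g : 'I_r -> 'I_n) :
  \rank Z = r -> \rank (rowsub f Z) = r -> colsub g (rowsub f Z) \in unitmx ->
  Z = colsub g Z *m invmx (colsub g (rowsub f Z)) *m rowsub f Z.
Proof.
move=> rZ rR uM.
have sub : (rowsub f Z <= Z)%MS by rewrite rowsubE submxMl.
have : (Z <= rowsub f Z)%MS.
  by have := mxrank_leqif_sup sub; rewrite rZ rR => /leqif_refl.
case/submxP => X defZ.
by rewrite {2}defZ -mulmx_colsub mulmxK // -defZ.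
Qed.

Lemma exists_sub (F : fieldType) n r (Z : 'M[F]_n) : \rank Z = r ->
  exists f g : {ffun 'I_r -> 'I_n},
    \rank (rowsub f Z) = r /\ colsub g (rowsub f Z) \in unitmx.
Proof.
move=> rZ; subst r.
pose f0 := maxrankfun Z.
have hf : \rank (rowsub f0 Z) = \rank Z by apply/eqP; exact: maxrowsub_free.
pose A := (rowsub f0 Z)^T.
have hA : row_full A by rewrite /row_full mxrank_tr hf.
exists f0, (fullrankfun hA); split => //.
rewrite -unitmx_tr.
have -> : (colsub (fullrankfun hA) (rowsub f0 Z))^T = rowsub (fullrankfun hA) A.
  by apply/matrixP => i j; rewrite !mxE.
exact: fullrowsub_unit.
Qed.


Definition phi (F : finFieldType) (r s : nat) (p : 'M[F]_r * ('M[F]_(r, s) * 'M[F]_(s, r))) : 'M[F]_(r + s) :=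
  col_mx 1%:M p.2.2 *m p.1 *m row_mx 1%:M p.2.1.

Lemma phi_extract (F : finFieldType) (r s : nat) (M : 'M[F]_r) (X : 'M[F]_(r, s)) (Y : 'M[F]_(s, r)) :
  row_mx 1%:M 0 *m phi (M, (X, Y)) *m col_mx 1%:M 0 = M.
Proof.
rewrite /phi /= !mulmxA mul_row_col mul1mx mul0mx addr0.
by rewrite -mulmxA mul_row_col mulmx0 addr0 !mul1mx mulmx1.
Qed.

Lemma phi_rank (F : finFieldType) (r s : nat) (M : 'M[F]_r) (X : 'M[F]_(r, s)) (Y : 'M[F]_(s, r)) : M \in unitmx -> \rank (phi (M, (X, Y))) = r.
Proof.
move=> uM; apply/eqP; rewrite eqn_leq; apply/andP; split.
  by rewrite /phi (leq_trans (mxrankM_maxr _ _)) // rank_leq_row.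
rewrite -{1}(mxrank_unit uM) -{1}(phi_extract M X Y).
by rewrite (leq_trans (mxrankM_maxl _ _)) // mxrankM_maxr.
Qed.

Lemma phi_inj_in (F : finFieldType) (r s : nat) : {in [set p : 'M[F]_r * ('M[F]_(r, s) * 'M[F]_(s, r)) | p.1 \in unitmx] &, injective (@phi F r s)}.
Proof.
move=> [M [X Y]] [M' [X' Y']]; rewrite !inE /= => uM uM' e.
have eM : M = M' by rewrite -(phi_extract M X Y) e phi_extract.
subst M'.
have eX : row_mx 1%:M X = row_mx 1%:M X' :> 'M[F]_(r, r + s).
  have := congr1 (mulmx (row_mx 1%:M 0)) e.
  rewrite /phi /= !mulmxA !mul_row_col !mul1mx !mul0mx !addr0.
  by move/(congr1 (mulmx (invmx M))); rewrite !mul1mx !mulmxA !mulVmx // !mul1mx.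
have eY : col_mx 1%:M Y = col_mx 1%:M Y' :> 'M[F]_(r + s, r).
  have := congr1 (mulmx^~ (col_mx 1%:M 0)) e.
  rewrite /phi /= -!mulmxA !mul_row_col !mulmx1 !mulmx0 !addr0 !mulmx1.
  by move/(congr1 (mulmx^~ (invmx M))); rewrite -!mulmxA !mulmxV // !mulmx1.
by case/eq_row_mx: eX => _ ->; case/eq_col_mx: eY => _ ->.
Qed.

Lemma card_unitmx (F : finFieldType) (r : nat) : (0 < r)%nat -> #|[set M : 'M[F]_r | M \in unitmx]| =
  (#|F| ^ 'C(r, 2) * \prod_(1 <= i < r.+1) (#|F| ^ i - 1))%nat.
Proof.
case: r => // r' _.
rewrite -card_GL //= cardsT /= card_sub; apply: eq_card => A.
by rewrite !inE.
Qed.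

Lemma den_lower (F : finFieldType) (r s : nat) : (0 < r)%nat ->
  (#|F| ^ 'C(r, 2) * \prod_(1 <= i < r.+1) (#|F| ^ i - 1) * (#|F| ^ (r * s) * #|F| ^ (s * r)) <=
  #|[pred Z : 'M[F]_(r + s) | \rank Z == r]|)%nat.
Proof.
move=> r0.
set dom := [set p : 'M[F]_r * ('M[F]_(r, s) * 'M[F]_(s, r)) | p.1 \in unitmx].
have cdom : #|dom| = (#|F| ^ 'C(r, 2) * \prod_(1 <= i < r.+1) (#|F| ^ i - 1) * (#|F| ^ (r * s) * #|F| ^ (s * r)))%nat.
  rewrite -card_unitmx // -!card_mx -!cardsT -!cardsX.
  by apply: eq_card => -[M [X Y]]; rewrite !inE /= andbT.
rewrite -cdom -(card_in_imset (f := @phi F r s) (@phi_inj_in F r s)).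
apply: subset_leq_card; apply/subsetP => Z /imsetP [[M [X Y]]].
by rewrite inE /= => uM ->; rewrite inE /= phi_rank.
Qed.


Definition rw (F : finFieldType) n (Z : 'M[F]_n) (i : 'I_n) : nat :=
  #|[set j : 'I_n | Z i j != GRing.zero]|.
Definition cw (F : finFieldType) n (Z : 'M[F]_n) (j : 'I_n) : nat :=
  #|[set i : 'I_n | Z i j != GRing.zero]|.

Definition good (F : finFieldType) n r (Z : 'M[F]_n)
  (p : {ffun 'I_r -> 'I_n} * {ffun 'I_r -> 'I_n}) :=
  (\rank (rowsub p.1 Z) == r) && (colsub p.2 (rowsub p.1 Z) \in unitmx).

Definition enc (F : finFieldType) n r (Z : 'M[F]_n) :
  option (({ffun 'I_r -> 'I_n} * {ffun 'I_r -> 'I_n}) * {ffun 'I_r -> 'rV[F]_n}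
          * {ffun 'I_r -> 'rV[F]_n}) :=
  if [pick p | good Z p] is Some p then
    Some (p, [ffun i => row (p.1 i) Z], [ffun j => (col (p.2 j) Z)^T])
  else None.

Lemma num_bound (F : finFieldType) n r (P : pred nat) :
  (#|[pred Z : 'M[F]_n | (\rank Z == r) && [forall i, P (rw Z i)] && [forall j, P (cw Z j)]]|
   <= (n ^ r * n ^ r) * (#|[set v : 'rV[F]_n | P (vwt v)]| ^ r * #|[set v : 'rV[F]_n | P (vwt v)]| ^ r))%nat.
Proof.
set LW := [set v : 'rV[F]_n | P (vwt v)].
set A := [pred Z : 'M[F]_n | _].
pose B := setX (setX [set: {ffun 'I_r -> 'I_n} * {ffun 'I_r -> 'I_n}]
                    [set f : {ffun 'I_r -> 'rV[F]_n} | f \in ffun_on (mem LW)]) [set f : {ffun 'I_r -> 'rV[F]_n} | f \in ffun_on (mem LW)].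
have cB : #|Some @: B| = (n ^ r * n ^ r * (#|LW| ^ r * #|LW| ^ r))%nat.
  rewrite card_imset; last by move=> x y [].
  rewrite !cardsX cardsT card_prod !card_ffun !card_ord !cardsE card_ffun_on.
  by rewrite card_ord !mulnA /LW cardsE.
have ex : forall Z : 'M[F]_n, Z \in A -> exists p : {ffun 'I_r -> 'I_n} * {ffun 'I_r -> 'I_n}, good Z p.
  move=> Z; rewrite inE => /andP [/andP [/eqP rZ _] _].
  have [f [g [h1 h2]]] := exists_sub rZ.
  by exists (f, g); rewrite /good /= h1 eqxx h2.
have encE : forall Z : 'M[F]_n, Z \in A -> exists2 p : {ffun 'I_r -> 'I_n} * {ffun 'I_r -> 'I_n}, good Z p &
    enc r Z = Some (p, [ffun i => row (p.1 i) Z], [ffun j => (col (p.2 j) Z)^T]).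
  move=> Z hZ; rewrite /enc; case: pickP => [p hp | hn]; first by exists p.
  by have [p hp] := ex Z hZ; rewrite hn in hp.
have inj : {in A &, injective (@enc F n r)}.
  move=> Z1 Z2 h1 h2.
  have [[f g] hp1 ->] := encE Z1 h1; have [[f2 g2] hp2 ->] := encE Z2 h2.
  case=> ef eg erow ecol; subst f2 g2.
  have eR : rowsub f Z1 = rowsub f Z2.
    apply/matrixP => i j; have := congr1 (fun G : {ffun 'I_r -> 'rV[F]_n} => G i ord0 j) erow.
    by rewrite /= !ffunE !mxE.
  have eC : colsub g Z1 = colsub g Z2.
    apply/matrixP => i j; have := congr1 (fun G : {ffun 'I_r -> 'rV[F]_n} => G j ord0 i) ecol.
    by rewrite /= !ffunE !mxE.
  move: h1 h2 hp1 hp2; rewrite !inE /good /= => /andP[/andP[/eqP r1 _] _] /andP[/andP[/eqP r2 _] _].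
  move=> /andP [/eqP rr1 u1] /andP [/eqP rr2 u2].
  by rewrite (recon r1 rr1 u1) (recon r2 rr2 u2) eR eC.
rewrite -cB -(card_in_imset inj); apply: subset_leq_card; apply/subsetP => x /imsetP [Z hZ ->].
have [p _ ->] := encE Z hZ; apply/imsetP; exists (p, [ffun i => row (p.1 i) Z], [ffun j => (col (p.2 j) Z)^T]) => //.
move: hZ; rewrite inE => /andP [/andP [_ /forallP hr] /forallP hc].
rewrite !inE /=; apply/andP; split; apply/ffun_onP => i; rewrite ffunE inE.
  have := hr (p.1 i); congr (P _); apply: eq_card => j; by rewrite !inE !mxE.
have := hc (p.2 i); congr (P _); apply: eq_card => j; by rewrite !inE !mxE.
Qed.


Lemma prod_lb (D r : nat) : (1 < D)%nat ->
  (expn D 'C(r, 2) <= \prod_(1 <= i < r.+1) (expn D i - 1))%nat.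
Proof.
move=> D1; elim: r => [|r IH]; first by rewrite big_geq.
rewrite big_nat_recr //= binS bin1 expnD; apply: leq_mul => //.
rewrite expnS; have : (0 < expn D r)%nat by rewrite expn_gt0 (ltnW D1).
move: (expn D r) => x x0; nia.
Qed.

Lemma bin2_double (r : nat) : ('C(r, 2) + 'C(r, 2) = r * r - r)%nat.
Proof. elim: r => // r IH; rewrite binS bin1; nia. Qed.

Lemma den_lower2 (D r s : nat) : prime D -> (0 < r)%nat ->
  (expn D (r * r - r + 2 * (r * s)) <= #|[pred Z : 'M['F_D]_(r + s) | \rank Z == r]|)%nat.
Proof.
move=> hD r0; have := den_lower 'F_D s r0; rewrite card_Fp //.
apply: leq_trans.
have e : (r * r - r + 2 * (r * s) = 'C(r, 2) + 'C(r, 2) + (r * s + s * r))%nat.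
  by rewrite bin2_double; nia.
rewrite e !expnD.
exact: leq_mul (leq_mul (leqnn _) (prod_lb _ (prime_gt1 hD))) (leqnn _).
Qed.


End RingPart.

Section RealPart.
Local Open Scope R_scope.


Lemma INR_expn (a b : nat) : INR (expn a b) = INR a ^ b.
Proof.
elim: b => [|b IH]; first by rewrite expn0.
by rewrite expnS -multE mult_INR IH.
Qed.

Lemma INR_muln (a b : nat) : INR (muln a b) = INR a * INR b.
Proof. by rewrite -multE mult_INR. Qed.

Lemma INR_leq (a b : nat) : leq a b -> INR a <= INR b.
Proof. move=> h; apply: le_INR; exact/leP. Qed.

Lemma exp_le' x y : x <= y -> exp x <= exp y.
Proof.
move=> h; case: (Rle_lt_or_eq_dec _ _ h) => [h'|->]; last by right.
by left; apply: exp_increasing.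
Qed.

Lemma ln_le' x y : 0 < x -> x <= y -> ln x <= ln y.
Proof.
move=> h0 h; case: (Rle_lt_or_eq_dec _ _ h) => [h'|->]; last by right.
by left; apply: ln_increasing.
Qed.

Lemma Wb (D : nat) (hD : prime D) (m : nat) (eps c' : R) :
  (0 < m)%nat -> 0 < eps -> 0 < c' ->
  INR (m + D.-1)%nat <= Rpower (INR D) (eps/4) * INR m ->
  c' * ln (INR m) <= eps * ln (INR D) / 4 ->
  forall n : nat, INR #|[set v : 'rV['F_D]_n | Rleb (INR (vwt v)) (c' * INR n)]|
     <= INR m * Rpower (INR D) (eps * INR n / 2).
Proof.
move=> m0 he hc hma hcl n.
set w := c' * INR n.
have hn0 := pos_INR n.
have hw : 0 <= w by apply: Rmult_le_pos; lra.
have [h1 h2] := archimed w.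
have z0 : (0 <= up w)%Z.
  apply: BinInt.Z.lt_le_incl; apply: lt_0_IZR; lra.
set k := Z.to_nat (up w).
have hk : INR k = IZR (up w) by rewrite /k INR_IZR_INZ Znat.Z2Nat.id.
have sub : [set v : 'rV['F_D]_n | Rleb (INR (vwt v)) w] \subset [set v : 'rV['F_D]_n | (vwt v <= k)%nat].
  apply/subsetP => v; rewrite !inE /Rleb; case: Rle_dec => // hv _.
  apply/ltnW/ltP; apply: INR_lt; lra.
have cnt := @count_lw 'F_D n m k m0; rewrite card_Fp // in cnt.
have le1 := subset_leq_card sub.
have hnat := leq_trans (leq_mul le1 (leqnn _)) cnt.
have hR := INR_leq hnat; rewrite !INR_muln !INR_expn in hR.
set M := INR m in hR hma hcl *.
have hM1 : 1 <= M by rewrite /M; apply: (INR_leq m0).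
set W := INR _ in hR *.
set q := INR D in hma hcl *.
have hq : 1 < q.
  rewrite /q; have := INR_leq (prime_gt1 hD); rewrite /=; lra.
have hlnq : 0 <= ln q.
  rewrite -ln_1; apply: ln_le'; lra.
have hlnM : 0 <= ln M.
  rewrite -ln_1; apply: ln_le'; lra.
set a := Rpower q (eps / 4) in hma.
have ha : 0 < a by apply: exp_pos.
have hpow : INR (m + D.-1)%nat ^ n <= (a * M) ^ n.
  apply: pow_incr; split; [apply: pos_INR | exact: hma].
rewrite Rpow_mult_distr in hpow.
have hMn : 0 < M ^ n by apply: pow_lt; lra.
have hWle : W <= M ^ k * a ^ n.
  apply: (Rmult_le_reg_r (M ^ n)) => //.
  apply: Rle_trans hR _.
  rewrite Rmult_assoc; apply: Rmult_le_compat_l; first by apply: pow_le; lra.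
  exact: hpow.
have hMk : M ^ k <= M * exp (eps * INR n * ln q / 4).
  rewrite -Rpower_pow; last lra.
  apply: Rle_trans (_ : Rpower M (w + 1) <= _).
    apply: Rle_Rpower => //; lra.
  rewrite Rpower_plus Rpower_1; last lra.
  rewrite Rmult_comm; apply: Rmult_le_compat_l; first lra.
  rewrite /Rpower; apply: exp_le'; rewrite /w; nra.
have han : a ^ n = exp (eps * INR n * ln q / 4).
  rewrite -Rpower_pow // /a Rpower_mult /Rpower; congr exp; lra.
apply: Rle_trans hWle _.
apply: Rle_trans (_ : M * exp (eps * INR n * ln q / 4) * a ^ n <= _).
  apply: Rmult_le_compat_r; [apply: pow_le; lra | exact: hMk].
rewrite han Rmult_assoc -exp_plus /Rpower.
apply: Rmult_le_compat_l; first lra.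
right; congr exp; lra.
Qed.

Lemma num_link (D n r : nat) (w : R) :
  (#|[pred Z : 'M['F_D]_n | (\rank Z == r) && weights_le Z w]| <=
   (n ^ r * n ^ r) * (#|[set v : 'rV['F_D]_n | Rleb (INR (vwt v)) w]| ^ r *
                      #|[set v : 'rV['F_D]_n | Rleb (INR (vwt v)) w]| ^ r))%nat.
Proof.
apply: leq_trans (num_bound 'F_D n r (fun k => Rleb (INR k) w)).
by apply: eq_leq; apply: eq_card => Z; rewrite !inE /weights_le andbA.
Qed.

Lemma prob_le1 (D n r : nat) (w : R) : prob_low_weight D n r w <= 1.
Proof.
rewrite /prob_low_weight.
set N := #|_|; set T := #|_|.
have hNT : (N <= T)%nat.
  apply: subset_leq_card; apply/subsetP => Z; rewrite !inE => /andP[] //.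
case: (posnP T) => [T0 | Tp].
  have N0 : N = 0%nat by apply/eqP; rewrite -leqn0 -T0.
  rewrite N0 /Rdiv (_ : INR 0 = 0) // Rmult_0_l; lra.
have hT : 0 < INR T by apply: lt_0_INR; exact/ltP.
have := INR_leq hNT => h.
apply: (Rmult_le_reg_r (INR T)) => //.
rewrite Rmult_1_l /Rdiv Rmult_assoc Rinv_l; lra.
Qed.

Lemma main_aux (D : nat) (hD : prime D) (hodd : odd D) :
  forall eps : R, 0 < eps ->
  exists c' : R, 0 < c' /\
  exists C : R, 0 < C /\
  forall n' r : nat, leq 1 r -> leq r n' ->
    prob_low_weight D n' r (c' * INR n')
     <= C * Rpower (INR D) (INR r ^ 2 - 2 * (1 - eps) * INR n' * INR r).
Proof.
move=> eps he.
have D3 : leq 3 D.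
  move: (prime_gt1 hD) hodd; case: D {hD} => [|[|[|d]]] //.
set q := INR D.
have hq : 3 <= q.
  have := INR_leq D3; rewrite /q (_ : INR 3 = 3) //; simpl; lra.
have hlnq : 0 < ln q by rewrite -ln_1; apply: ln_increasing; lra.
set a := Rpower q (eps / 4).
have ha : 1 < a.
  rewrite /a -(Rpower_O q); last lra.
  apply: Rpower_lt; lra.
have [m0 hm0] := INR_unbounded ((q - 1) / (a - 1)).
set m := m0.+1.
have hm : INR m = INR m0 + 1 by rewrite /m S_INR.
have hm00 := pos_INR m0.
have hD1 : INR D.-1 = q - 1.
  have := prime_gt0 hD; rewrite /q => h0.
  rewrite -{2}(prednK h0) S_INR; lra.
have hma : INR (m + D.-1)%nat <= a * INR m.
  rewrite -plusE plus_INR hD1 hm.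
  have h1 : q - 1 < INR m0 * (a - 1).
    have := Rmult_lt_compat_r (a - 1) _ _ (ltac:(lra)) hm0.
    rewrite /Rdiv Rmult_assoc Rinv_l; lra.
  nra.
set L := ln (INR m).
have hL : 0 <= L by rewrite /L -ln_1; apply: ln_le'; lra.
set c' := eps * ln q / (4 * (L + 1)).
have hc : 0 < c' by rewrite /c'; apply: Rdiv_lt_0_compat; nra.
have hcl : c' * L <= eps * ln q / 4.
  have e : c' * L * (4 * (L + 1)) = eps * ln q * L by rewrite /c'; field; lra.
  apply: (Rmult_le_reg_r (4 * (L + 1))); first lra.
  rewrite e; nra.
set K := (eps * ln q / 3) ^ 3.
have hK : 0 < K by rewrite /K; apply: pow_lt; nra.
set M := INR m.
have hM1 : 1 <= M by rewrite /M hm; lra.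
set N0 := M ^ 2 * q / K.
have hN0K : N0 * K = M ^ 2 * q by rewrite /N0; field; lra.
have hN0 : 0 < N0 by rewrite /N0; apply: Rdiv_lt_0_compat => //; nra.
exists c'; split => //.
exists (Rpower q (2 * N0 ^ 2)); split; first by apply: exp_pos.
have hC1 : 1 <= Rpower q (2 * N0 ^ 2).
  rewrite -(Rpower_O q); last lra.
  apply: Rle_Rpower; nra.
move=> n r h1r hrn.
have hprob1 := prob_le1 D n r (c' * INR n).
have hr1 : 1 <= INR r by have := INR_leq h1r; simpl; lra.
have hrn' := INR_leq hrn.
have hnn0 := pos_INR n.
case: (Rlt_le_dec (INR n) N0) => hn.
  apply: Rle_trans hprob1 _.
  rewrite -Rpower_plus; apply: (Rle_trans _ (Rpower q 0)).
    by rewrite Rpower_O; lra.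
  apply: Rle_Rpower; first lra.
  have : INR n * INR r <= N0 * N0 by nra.
  have : 0 <= eps * (INR n * INR r).
    apply: Rmult_le_pos; first lra.
    apply: Rmult_le_pos; lra.
  move=> h2 h1; have h3 : 0 <= INR r ^ 2 by apply: pow2_ge_0.
  have e : 2 * N0 ^ 2 + (INR r ^ 2 - 2 * (1 - eps) * INR n * INR r) =
    2 * (N0 * N0 - INR n * INR r) + INR r ^ 2 + 2 * (eps * (INR n * INR r)) by ring.
  rewrite e; lra.
have [s hs] : exists s, n = (r + s)%nat by exists (n - r)%nat; rewrite subnKC.
subst n.
set n := INR (r + s)%nat in hn hrn' *.
have hnrs : n = INR r + INR s by rewrite /n -plusE plus_INR.
have hs0 := pos_INR s.
have hn0 : 0 <= n by rewrite /n; apply: pos_INR.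
have hWb := Wb hD (ltn0Sn m0) he hc hma hcl (r + s)%nat.
rewrite -/q -/n -/M in hWb.
set W := INR _ in hWb.
have hW0 : 0 <= W by apply: pos_INR.
have hNat := num_link D (r + s) r (c' * n).
have hNR := INR_leq hNat; rewrite !INR_muln !INR_expn -/W -/n in hNR.
have hTnat := den_lower2 s hD h1r.
have hTR := INR_leq hTnat; rewrite INR_expn -/q in hTR.
rewrite /prob_low_weight.
set N := INR #|_| in hNR *; set T := INR #|_| in hTR *.
have eB : INR (r * r - r + 2 * (r * s))%nat = INR r * INR r - INR r + 2 * (INR r * INR s).
  rewrite -plusE -minusE -!multE plus_INR minus_INR; last first.
    by apply/leP; rewrite multE leq_pmull.
  by rewrite !mult_INR (_ : INR 2 = 2).
rewrite -Rpower_pow in hTR; last lra.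
rewrite eB in hTR.
set B := INR r * INR r - INR r + 2 * (INR r * INR s) in hTR.
have hcond : n ^ 2 * M ^ 2 * q <= Rpower q (eps * n).
  set t := eps * n * ln q / 3.
  have ht0 : 0 <= t.
    rewrite /t; have := Rmult_le_pos _ _ (Rmult_le_pos _ _ (Rlt_le _ _ he) hn0) (Rlt_le _ _ hlnq); lra.
  have het : t <= exp t by have := exp_ineq1_le t; lra.
  have e3 : Rpower q (eps * n) = exp t * exp t * exp t.
    by rewrite -!exp_plus /Rpower /t; congr exp; lra.
  rewrite e3.
  have htK : t ^ 3 = n ^ 3 * K by rewrite /t /K; field.
  have : t ^ 3 <= exp t * exp t * exp t.
    have h2 : t * t <= exp t * exp t by apply: Rmult_le_compat.
    have h20 : 0 <= t * t by apply: Rmult_le_pos.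
    have -> : t ^ 3 = t * t * t by ring.
    by apply: Rmult_le_compat.
  have : n ^ 2 * M ^ 2 * q <= n ^ 3 * K.
    have -> : n ^ 2 * M ^ 2 * q = n ^ 2 * (N0 * K) by rewrite hN0K; ring.
    have h0 : 0 <= n ^ 2 * K by apply: Rmult_le_pos; [apply: pow_le; lra | lra].
    have -> : n ^ 3 * K = (n ^ 2 * K) * n by ring.
    have -> : n ^ 2 * (N0 * K) = (n ^ 2 * K) * N0 by ring.
    by apply: Rmult_le_compat_l.
  lra.
set P := Rpower q (eps * n / 2) in hWb.
have hP2 : P * P = Rpower q (eps * n) by rewrite /P -Rpower_plus; congr Rpower; lra.
have hP0 : 0 < P by apply: exp_pos.
have hqinv : Rpower q (2 * eps * n - 1) = Rpower q (eps * n) * Rpower q (eps * n) / q.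
  have -> : 2 * eps * n - 1 = eps * n + eps * n + Ropp 1 by ring.
  rewrite !Rpower_plus Rpower_Ropp Rpower_1 //; lra.
have hbase : n ^ 2 * W ^ 2 <= Rpower q (2 * eps * n - 1).
  rewrite hqinv.
  apply: (Rmult_le_reg_r q); first lra.
  rewrite (_ : Rpower q (eps * n) * Rpower q (eps * n) / q * q =
               Rpower q (eps * n) * Rpower q (eps * n)); last by field; lra.
  have hW2 : W ^ 2 <= M ^ 2 * Rpower q (eps * n).
    rewrite -hP2; have : W <= M * P by []. have : 0 <= W by []. simpl; nra.
  have hn2 : 0 <= n ^ 2 by apply: pow_le.
  have hE0 : 0 <= Rpower q (eps * n) by left; apply: exp_pos.
  have : n ^ 2 * W ^ 2 * q <= n ^ 2 * (M ^ 2 * Rpower q (eps * n)) * q.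
    apply: Rmult_le_compat_r; first lra.
    by apply: Rmult_le_compat_l.
  nra.
have hNb : N <= Rpower q ((2 * eps * n - 1) * INR r).
  apply: Rle_trans hNR _.
  have -> : n ^ r * n ^ r * (W ^ r * W ^ r) = (n ^ 2 * W ^ 2) ^ r.
    by rewrite (_ : n ^ 2 * W ^ 2 = (n * n) * (W * W)); [rewrite !Rpow_mult_distr | ring].
  rewrite -Rpower_mult Rpower_pow; last by apply: exp_pos.
  apply: pow_incr; split => //.
  apply: Rmult_le_pos; apply: pow_le => //; rewrite /n; apply: pos_INR.
have hTp : 0 < Rpower q B by apply: exp_pos.
have hT0 : 0 < T by lra.
apply: (Rle_trans _ (Rpower q ((2 * eps * n - 1) * INR r + - B))).
  rewrite Rpower_plus Rpower_Ropp /Rdiv.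
  apply: Rmult_le_compat => //.
  - by apply: pos_INR.
  - by left; apply: Rinv_0_lt_compat.
  - by apply: Rinv_le_contravar.
have -> : (2 * eps * n - 1) * INR r + - B =
          INR r ^ 2 - 2 * (1 - eps) * n * INR r by rewrite /B hnrs; ring.
rewrite -{1}(Rmult_1_l (Rpower q _)).
apply: Rmult_le_compat_r => //; left; apply: exp_pos.
Qed.

End RealPart.

Unset Implicit Arguments.

Theorem lemma9 (D : nat) (hD : prime D) (hodd : odd D) :
  forall eps : R, (0 < eps)%R ->
  exists c' : R, (0 < c')%R /\
  exists C : R, (0 < C)%R /\
  forall n' r : nat, (1 <= r)%N -> (r <= n')%N ->
    (prob_low_weight D n' r (c' * INR n')
     <= C * Rpower (INR D) (INR r ^ 2 - 2 * (1 - eps) * INR n' * INR r))%R.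
Proof. exact: main_aux. Qed.
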